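(* Let $X$ be a locally super-compact $L$-sober space. Then $\Omega_LX$ is a continuous $L$-dcpo.
   Context: $L$ is a frame with implication $\to$. $L$-subsets: maps to $L$; nonempty: $\bigvee A=1$; ${\rm sub}_X(A,B)=\bigwedge_xA(x)\to B(x)$. $L$-topology: $\mathcal O(X)\subseteq L^X$ closed under finite meets and arbitrary joins containing all constants $a_X$; interior $A^\circ$ is the join of open sets below $A$. Super-compact: nonempty $A$ with ${\rm sub}_X(A,\bigvee_iV_i)=\bigvee_i{\rm sub}_X(A,V_i)$ for every family of open $V_i$; ${\rm SC}(X)$ their set. Locally super-compact: every open $A=\bigvee_{B\in{\rm SC}(X)}{\rm sub}_X(B,A)\wedge B^\circ$. A point of $\mathcal O(X)$: $p:\mathcal O(X)\to L$ preserving binary meets, arbitrary joins, with $p(\lambda_X)=\lambda$; $[x](A)=A(x)$; $L$-sober: $x\mapsto[x]$ bijective onto the points (in particular $X$ is $T_0$). $\Omega_LX$ is $X$ with the specialization $L$-order $e(x,y)=\bigwedge_{A\in\mathcal O(X)}A(x)\to A(y)$. For an $L$-ordered set $(P,e)$ ($e(x,x)=1$, $e(x,y)\wedge e(y,z)\le e(x,z)$, $e(x,y)\wedge e(y,x)=1\Rightarrow x=y$): ${\downarrow}y(x)=e(x,y)$; $\sqcup A=x$ iff $e(x,y)={\rm sub}_P(A,{\downarrow}y)$ for all $y$; directed: nonempty and $D(x)\wedge D(y)\le\bigvee_zD(z)\wedge e(x,z)\wedge e(y,z)$; ideal: directed lower set; $L$-dcpo: all directed $L$-subsets have suprema; ${\Downarrow}x(y)=\bigwedge\{e(x,\sqcup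 I)\to I(y):I\text{ ideal with a supremum}\}$; continuous $L$-dcpo: an $L$-dcpo in which each ${\Downarrow}x$ is directed with supremum $x$. *)

(* Defs.v *)
(** A frame = complete Heyting algebra: a complete lattice (arbitrary joins
    [sup] of subsets) with binary meets and an implication right adjoint to
    meet.  (Infinite distributivity follows from the adjunction.) *)
Record frame := Frame {
  car :> Type;
  le : car -> car -> Prop;
  le_refl : forall a, le a a;
  le_trans : forall a b c, le a b -> le b c -> le a c;
  le_antisym : forall a b, le a b -> le b a -> a = b;
  meet : car -> car -> car;
  meet_l : forall a b, le (meet a b) a;
  meet_r : forall a b, le (meet a b) b;
  meet_glb : forall a b c, le c a -> le c b -> le c (meet a b);
  sup : (car -> Prop) -> car;
  sup_ub : forall (S : car -> Prop) a, S a -> le a (sup S);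
  sup_least : forall (S : car -> Prop) b, (forall a, S a -> le a b) -> le (sup S) b;
  imp : car -> car -> car;
  imp_adj : forall a b c, le (meet a b) c <-> le a (imp b c)
}.

Arguments le {f}.
Arguments meet {f}.
Arguments sup {f}.
Arguments imp {f}.

Section Frames.
Variable L : frame.

Definition top : L := sup (fun _ => True).
Definition jn (I : Type) (f : I -> L) : L := sup (fun a => exists i, f i = a).
Definition inf (S : L -> Prop) : L := sup (fun x => forall s, S s -> le x s).
Definition mt (I : Type) (f : I -> L) : L := inf (fun a => exists i, f i = a).

(** L-subsets of X are maps X -> L *)
Definition nonempty {X : Type} (A : X -> L) : Prop := jn X A = top.
Definition subd {X : Type} (A B : X -> L) : L := mt X (fun x => imp (A x) (B x)).
Definition const {X : Type} (a : L) : X -> L := fun _ => a.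

Definition is_Ltopology {X : Type} (O : (X -> L) -> Prop) : Prop :=
  (forall A B, O A -> O B -> O (fun x => meet (A x) (B x))) /\
  (forall (I : Type) (V : I -> X -> L), (forall i, O (V i)) ->
      O (fun x => jn I (fun i => V i x))) /\
  (forall a : L, O (const a)).

Definition interior {X : Type} (O : (X -> L) -> Prop) (A : X -> L) : X -> L :=
  fun x => sup (fun a => exists U, O U /\ (forall y, le (U y) (A y)) /\ a = U x).

Definition super_compact {X : Type} (O : (X -> L) -> Prop) (A : X -> L) : Prop :=
  nonempty A /\
  forall (I : Type) (V : I -> X -> L), (forall i, O (V i)) ->
    subd A (fun x => jn I (fun i => V i x)) = jn I (fun i => subd A (V i)).

Definition locally_super_compact {X : Type} (O : (X -> L) -> Prop) : Prop :=
  forall A, O A ->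
    A = (fun x => sup (fun a => exists B, super_compact O B /\
                                   a = meet (subd B A) (interior O B x))).

(** points of O(X): maps defined on open L-subsets (values off O(X) are
    irrelevant) preserving binary meets, arbitrary joins and constants *)
Definition is_point {X : Type} (O : (X -> L) -> Prop) (p : (X -> L) -> L) : Prop :=
  (forall A B, O A -> O B -> p (fun x => meet (A x) (B x)) = meet (p A) (p B)) /\
  (forall (I : Type) (V : I -> X -> L), (forall i, O (V i)) ->
      p (fun x => jn I (fun i => V i x)) = jn I (fun i => p (V i))) /\
  (forall a : L, p (const a) = a).

(** L-sober: x |-> [x] (restricted to O(X)) is a bijection onto the points *)
Definition L_sober {X : Type} (O : (X -> L) -> Prop) : Prop :=
  (forall x y : X, (forall A, O A -> A x = A y) -> x = y) /\
  (forall p, is_point O p -> exists x, forall A, O A -> p A = A x).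

(** specialization L-order of Omega_L X *)
Definition spec {X : Type} (O : (X -> L) -> Prop) (x y : X) : L :=
  mt {A : X -> L | O A} (fun A => imp (proj1_sig A x) (proj1_sig A y)).

Definition L_order {P : Type} (e : P -> P -> L) : Prop :=
  (forall x, e x x = top) /\
  (forall x y z, le (meet (e x y) (e y z)) (e x z)) /\
  (forall x y, meet (e x y) (e y x) = top -> x = y).

Definition downset {P : Type} (e : P -> P -> L) (y : P) : P -> L := fun x => e x y.

Definition is_lsup {P : Type} (e : P -> P -> L) (A : P -> L) (x : P) : Prop :=
  forall y, e x y = subd A (downset e y).

Definition directed {P : Type} (e : P -> P -> L) (D : P -> L) : Prop :=
  nonempty D /\
  forall x y, le (meet (D x) (D y))
                 (jn P (fun z => meet (D z) (meet (e x z) (e y z)))).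

Definition lower_set {P : Type} (e : P -> P -> L) (D : P -> L) : Prop :=
  forall x y, le (meet (D x) (e y x)) (D y).

Definition ideal {P : Type} (e : P -> P -> L) (D : P -> L) : Prop :=
  directed e D /\ lower_set e D.

Definition L_dcpo {P : Type} (e : P -> P -> L) : Prop :=
  L_order e /\ forall D, directed e D -> exists x, is_lsup e D x.

Definition waybelow {P : Type} (e : P -> P -> L) (x : P) : P -> L :=
  fun y => mt {Is : (P -> L) * P | ideal e (fst Is) /\ is_lsup e (fst Is) (snd Is)}
              (fun Is => imp (e x (snd (proj1_sig Is))) (fst (proj1_sig Is) y)).

Definition continuous_L_dcpo {P : Type} (e : P -> P -> L) : Prop :=
  L_dcpo e /\
  forall x, directed e (waybelow e x) /\ is_lsup e (waybelow e x) x.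

End Frames.

(* Main.v *)
Require Import Defs.
From Stdlib Require Import FunctionalExtensionality.

Lemma letr {L : frame} {a : L} (b : L) {c : L} : le a b -> le b c -> le a c.
Proof. apply le_trans. Qed.

Lemma leq {L : frame} (a b : L) : le a b -> le b a -> a = b.
Proof. apply le_antisym. Qed.

Ltac msolve :=
  match goal with
  | |- le ?a ?a => apply le_refl
  | |- le _ (meet _ _) => apply meet_glb; msolve
  | |- le (meet _ _) _ =>
      first [ apply (letr _ (meet_l _ _ _)); msolve
            | apply (letr _ (meet_r _ _ _)); msolve ]
  end.

Lemma top_max {L : frame} (a : L) : le a (top L).
Proof. apply sup_ub; exact I. Qed.

Lemma meet_mono {L : frame} (a b c d : L) : le a c -> le b d -> le (meet a b) (meet c d).
Proof. intros; apply meet_glb; [apply (letr a) | apply (letr b)]; auto; msolve. Qed.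

Lemma meet_top_r {L : frame} (a : L) : le a (meet a (top L)).
Proof. apply meet_glb; [apply le_refl | apply top_max]. Qed.

Lemma mp {L : frame} (a b : L) : le (meet (imp a b) a) b.
Proof. apply imp_adj, le_refl. Qed.

Lemma sup_elim_l {L : frame} (S : L -> Prop) (b c : L) :
  (forall s, S s -> le (meet s b) c) -> le (meet (sup S) b) c.
Proof. intros H. apply imp_adj. apply sup_least. intros s Hs. apply imp_adj. auto. Qed.

Lemma sup_elim_r {L : frame} (S : L -> Prop) (b c : L) :
  (forall s, S s -> le (meet b s) c) -> le (meet b (sup S)) c.
Proof. intros H. apply (letr (meet (sup S) b)); [msolve|].
  apply sup_elim_l. intros s Hs. apply (letr (meet b s)); [msolve|auto]. Qed.

Lemma jn_ub {L : frame} I (f : I -> L) i : le (f i) (jn L I f).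
Proof. apply sup_ub. exists i; reflexivity. Qed.

Lemma jn_least {L : frame} I (f : I -> L) b : (forall i, le (f i) b) -> le (jn L I f) b.
Proof. intros H; apply sup_least. intros a [i <-]; auto. Qed.

Lemma jn_elim_l {L : frame} I (f : I -> L) b c :
  (forall i, le (meet (f i) b) c) -> le (meet (jn L I f) b) c.
Proof. intros H; apply sup_elim_l. intros s [i <-]; auto. Qed.

Lemma jn_elim_r {L : frame} I (f : I -> L) b c :
  (forall i, le (meet b (f i)) c) -> le (meet b (jn L I f)) c.
Proof. intros H; apply sup_elim_r. intros s [i <-]; auto. Qed.

Lemma mt_lb {L : frame} I (f : I -> L) i : le (mt L I f) (f i).
Proof. apply sup_least. intros x Hx. apply Hx. exists i; reflexivity. Qed.

Lemma mt_glb {L : frame} I (f : I -> L) b : (forall i, le b (f i)) -> le b (mt L I f).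
Proof. intros H; apply sup_ub. intros s [i <-]; auto. Qed.

Lemma subd_intro {L : frame} {X} (A B : X -> L) c :
  (forall x, le (meet c (A x)) (B x)) -> le c (subd L A B).
Proof. intros H; apply mt_glb; intros x; apply imp_adj; auto. Qed.

Lemma subd_elim {L : frame} {X} (A B : X -> L) x :
  le (meet (subd L A B) (A x)) (B x).
Proof. apply imp_adj. apply (mt_lb X (fun x => imp (A x) (B x)) x). Qed.

Lemma spec_intro {L : frame} {X} (O : (X -> L) -> Prop) x y c :
  (forall U, O U -> le (meet c (U x)) (U y)) -> le c (spec L O x y).
Proof. intros H; apply mt_glb; intros [U HU]; apply imp_adj; simpl; auto. Qed.

Lemma spec_elim {L : frame} {X} (O : (X -> L) -> Prop) x y U :
  O U -> le (meet (spec L O x y) (U x)) (U y).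
Proof. intros HU. apply imp_adj.
  apply (mt_lb {A : X -> L | O A} (fun A => imp (proj1_sig A x) (proj1_sig A y)) (exist _ U HU)). Qed.

Lemma spec_refl {L : frame} {X} (O : (X -> L) -> Prop) x : spec L O x x = top L.
Proof. apply leq. apply top_max. apply spec_intro; intros; msolve. Qed.

Lemma spec_trans {L : frame} {X} (O : (X -> L) -> Prop) x y z :
  le (meet (spec L O x y) (spec L O y z)) (spec L O x z).
Proof. apply spec_intro; intros U HU.
  apply (letr (meet (spec L O y z) (meet (spec L O x y) (U x)))); [msolve|].
  apply (letr (meet (spec L O y z) (U y))); [apply meet_mono; [apply le_refl| apply spec_elim; auto]|].
  apply spec_elim; auto. Qed.

Lemma jn_intro {L : frame} {I} {f : I -> L} {a : L} (i : I) : le a (f i) -> le a (jn L I f).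
Proof. intros H; apply (letr _ H); apply jn_ub. Qed.

Lemma spec_order {L : frame} {X} (O : (X -> L) -> Prop) :
  L_sober L O -> L_order L (spec L O).
Proof.
  intros [T0 _]. split; [|split].
  - apply spec_refl.
  - apply spec_trans.
  - intros x y H. apply T0. intros A HA.
    assert (H1 : le (top L) (spec L O x y)) by (rewrite <- H; msolve).
    assert (H2 : le (top L) (spec L O y x)) by (rewrite <- H; msolve).
    apply leq.
    + apply (letr (meet (spec L O x y) (A x))); [apply meet_glb; [apply (letr (top L)); [apply top_max|auto]|apply le_refl]|].
      apply spec_elim; auto.
    + apply (letr (meet (spec L O y x) (A y))); [apply meet_glb; [apply (letr (top L)); [apply top_max|auto]|apply le_refl]|].
      apply spec_elim; auto.
Qed.

Lemma lsup_unique {L : frame} {P} (e : P -> P -> L) D s s' :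
  L_order L e -> is_lsup L e D s -> is_lsup L e D s' -> s = s'.
Proof.
  intros [Hr [_ Ha]] H H'. apply Ha.
  assert (E1 : e s s' = top L) by (rewrite H, <- H', Hr; reflexivity).
  assert (E2 : e s' s = top L) by (rewrite H', <- H, Hr; reflexivity).
  rewrite E1, E2. apply leq; [apply top_max| msolve].
Qed.

Lemma directed_point {L : frame} {X} (O : (X -> L) -> Prop) (D : X -> L) :
  directed L (spec L O) D ->
  is_point L O (fun U => jn L X (fun x => meet (D x) (U x))).
Proof.
  intros [Hne Hdir]. split; [|split].
  - intros A B HA HB. apply leq.
    + apply jn_least; intros x. apply meet_glb; (apply (jn_intro x); simpl; msolve).
    + apply jn_elim_l; intros x. apply jn_elim_r; intros y.
      apply (letr (meet (meet (D x) (D y)) (meet (A x) (B y)))); [msolve|].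
      apply (letr (meet (jn L X (fun z => meet (D z) (meet (spec L O x z) (spec L O y z)))) (meet (A x) (B y)))).
      { apply meet_mono; [apply Hdir | apply le_refl]. }
      apply jn_elim_l; intros z. apply (jn_intro z); simpl.
      apply meet_glb; [msolve|]. apply meet_glb.
      * apply (letr (meet (spec L O x z) (A x))); [msolve| apply spec_elim; auto].
      * apply (letr (meet (spec L O y z) (B y))); [msolve| apply spec_elim; auto].
  - intros I V HV. apply leq.
    + apply jn_least; intros x. apply jn_elim_r; intros i.
      apply (jn_intro i); simpl. apply (jn_intro x); simpl. apply le_refl.
    + apply jn_least; intros i. apply jn_least; intros x.
      apply (jn_intro x); simpl. apply meet_mono; [apply le_refl|].
      apply (jn_ub _ (fun i => V i x)).
  - intros a. unfold const. apply leq.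
    + apply jn_least; intros; msolve.
    + apply (letr (meet (jn L X D) a)).
      { apply meet_glb; [|apply le_refl]. unfold nonempty in Hne. rewrite Hne. apply top_max. }
      apply jn_elim_l; intros x. apply (jn_intro x); simpl. apply le_refl.
Qed.

Lemma directed_lsup {L : frame} {X} (O : (X -> L) -> Prop) (D : X -> L) :
  L_sober L O -> directed L (spec L O) D ->
  exists x0, is_lsup L (spec L O) D x0 /\
    forall U, O U -> U x0 = jn L X (fun x => meet (D x) (U x)).
Proof.
  intros [_ HS] Hd. destruct (HS _ (directed_point O D Hd)) as [x0 Hx0].
  exists x0. split; [|intros U HU; symmetry; apply Hx0; auto].
  intros y. apply leq.
  - apply subd_intro; intros x. unfold downset. apply spec_intro; intros U HU.
    apply (letr (meet (spec L O x0 y) (U x0))); [|apply spec_elim; auto].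
    rewrite <- (Hx0 U HU). apply (letr (meet (spec L O x0 y) (meet (D x) (U x)))); [msolve|].
    apply meet_mono; [apply le_refl|]. apply (jn_ub _ (fun x => meet (D x) (U x))).
  - apply spec_intro; intros U HU. rewrite <- (Hx0 U HU).
    apply jn_elim_r; intros x.
    apply (letr (meet (meet (subd L D (downset L (spec L O) y)) (D x)) (U x))); [msolve|].
    apply (letr (meet (spec L O x y) (U x))); [|apply spec_elim; auto].
    apply meet_mono; [apply (subd_elim D (downset L (spec L O) y) x)|apply le_refl].
Qed.

Lemma lsup_open {L : frame} {X} (O : (X -> L) -> Prop) (D : X -> L) s :
  L_sober L O -> directed L (spec L O) D -> is_lsup L (spec L O) D s ->
  forall U, O U -> U s = jn L X (fun x => meet (D x) (U x)).
Proof.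
  intros HS Hd Hs. destruct (directed_lsup O D HS Hd) as [x0 [H0 H1]].
  rewrite (lsup_unique _ D s x0 (spec_order O HS) Hs H0). auto.
Qed.

Lemma sc_rep {L : frame} {X} (O : (X -> L) -> Prop) B :
  L_sober L O -> super_compact L O B -> exists w, forall U, O U -> U w = subd L B U.
Proof.
  intros [_ HS] [Hne Hj].
  assert (Hp : is_point L O (fun U => subd L B U)).
  { split; [|split].
    - intros A C HA HC. apply leq.
      + apply meet_glb; apply subd_intro; intros x;
        (apply (letr _ (subd_elim B _ x)); simpl; msolve).
      + apply subd_intro; intros x. apply meet_glb.
        * apply (letr (meet (subd L B A) (B x))); [msolve|apply subd_elim].
        * apply (letr (meet (subd L B C) (B x))); [msolve|apply subd_elim].
    - intros I V HV. apply Hj; auto.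
    - intros a. apply leq.
      + apply (letr (meet (subd L B (const L a)) (jn L X B))).
        { apply meet_glb; [apply le_refl|]. unfold nonempty in Hne; rewrite Hne; apply top_max. }
        apply jn_elim_r; intros x. apply (subd_elim B (const L a) x).
      + apply subd_intro; intros x; unfold const; msolve. }
  destruct (HS _ Hp) as [w Hw]. exists w. intros U HU. symmetry; auto.
Qed.

Lemma rep_le {L : frame} {X} (O : (X -> L) -> Prop) B w y :
  (forall U, O U -> U w = subd L B U) -> le (B y) (spec L O w y).
Proof.
  intros Hw. apply spec_intro; intros U HU. rewrite (Hw U HU).
  apply (letr (meet (subd L B U) (B y))); [msolve|apply subd_elim].
Qed.

Lemma int_le {L : frame} {X} (O : (X -> L) -> Prop) B y :
  le (interior L O B y) (B y).
Proof. apply sup_least. intros a [U [_ [H ->]]]. auto. Qed.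

Lemma int_open {L : frame} {X} (O : (X -> L) -> Prop) B :
  is_Ltopology L O -> O (interior L O B).
Proof.
  intros [_ [Hj _]].
  pose (Ix := {U : X -> L | O U /\ forall y, le (U y) (B y)}).
  assert (E : interior L O B = fun x => jn L Ix (fun i => proj1_sig i x)).
  { apply functional_extensionality; intros x. apply leq.
    - apply sup_least. intros a [U [HU [HB ->]]].
      apply (jn_intro (exist _ U (conj HU HB) : Ix)). apply le_refl.
    - apply jn_least. intros [U [HU HB]]. simpl. apply sup_ub. exists U; auto. }
  rewrite E. apply Hj. intros [U [HU HB]]; exact HU.
Qed.

Lemma cover {L : frame} {X} (O : (X -> L) -> Prop) (x : X) U c d :
  locally_super_compact L O -> L_sober L O -> O U ->
  (forall B w, super_compact L O B -> (forall V, O V -> V w = subd L B V) ->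
      le (meet c (meet (U w) (interior L O B x))) d) ->
  le (meet c (U x)) d.
Proof.
  intros HL HS HU H.
  pose proof (f_equal (fun f => f x) (HL U HU)) as E; simpl in E. rewrite E.
  apply sup_elim_r. intros a [B [Hsc ->]].
  destruct (sc_rep O B HS Hsc) as [w Hw]. rewrite <- (Hw U HU). auto.
Qed.

Definition Iw {L : frame} {X} (O : (X -> L) -> Prop) (x : X) : X -> L :=
  fun z => sup (fun a => exists B w, super_compact L O B /\
                 (forall U, O U -> U w = subd L B U) /\
                 a = meet (interior L O B x) (spec L O z w)).

Lemma Iw_ge {L : frame} {X} (O : (X -> L) -> Prop) x B w :
  super_compact L O B -> (forall U, O U -> U w = subd L B U) ->
  le (interior L O B x) (Iw O x w).
Proof.
  intros Hsc Hw. apply (letr (meet (interior L O B x) (spec L O w w))).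
  { rewrite spec_refl. apply meet_top_r. }
  apply sup_ub. exists B, w; auto.
Qed.

Lemma Iw_ideal {L : frame} {X} (O : (X -> L) -> Prop) x :
  is_Ltopology L O -> locally_super_compact L O -> L_sober L O ->
  ideal L (spec L O) (Iw O x).
Proof.
  intros HT HL HS. split; [split|].
  - unfold nonempty. apply leq; [apply top_max|].
    destruct HT as [_ [_ Hc]].
    apply (letr (meet (top L) (const L (top L) x))); [unfold const; msolve|].
    apply (cover O x); auto. intros B w Hsc Hw.
    apply (jn_intro w). apply (letr (interior L O B x)); [msolve|]. apply Iw_ge; auto.
  - intros a b. unfold Iw at 1. apply sup_elim_l. intros s1 [B1 [w1 [Hsc1 [Hw1 ->]]]].
    apply sup_elim_r. intros s2 [B2 [w2 [Hsc2 [Hw2 ->]]]].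
    pose (W := fun y => meet (interior L O B1 y) (interior L O B2 y)).
    assert (HW : O W).
    { pose proof HT as [Hm _]. apply Hm; apply int_open; auto. }
    apply (letr (meet (meet (spec L O a w1) (spec L O b w2)) (W x))); [unfold W; msolve|].
    apply (cover O x); auto. intros B w Hsc Hw.
    apply (jn_intro w). apply meet_glb.
    + apply (letr (interior L O B x)); [msolve|]. apply Iw_ge; auto.
    + unfold W. apply meet_glb.
      * apply (letr (meet (spec L O a w1) (spec L O w1 w))); [|apply spec_trans].
        apply meet_glb; [msolve|]. apply (letr (B1 w)); [|apply rep_le; auto].
        apply (letr (interior L O B1 w)); [msolve|apply int_le].
      * apply (letr (meet (spec L O b w2) (spec L O w2 w))); [|apply spec_trans].
        apply meet_glb; [msolve|]. apply (letr (B2 w)); [|apply rep_le; auto].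
        apply (letr (interior L O B2 w)); [msolve|apply int_le].
  - intros z y. unfold Iw at 1. apply sup_elim_l. intros s [B [w [Hsc [Hw ->]]]].
    apply (letr (meet (interior L O B x) (spec L O y w))).
    + apply meet_glb; [msolve|].
      apply (letr (meet (spec L O y z) (spec L O z w))); [msolve|apply spec_trans].
    + apply sup_ub. exists B, w. auto.
Qed.

Lemma Iw_lsup {L : frame} {X} (O : (X -> L) -> Prop) x :
  is_Ltopology L O -> locally_super_compact L O -> L_sober L O ->
  is_lsup L (spec L O) (Iw O x) x.
Proof.
  intros HT HL HS y. apply leq.
  - apply subd_intro; intros z. unfold downset.
    assert (Hz : le (Iw O x z) (spec L O z x)).
    { apply sup_least. intros a [B [w [Hsc [Hw ->]]]].
      apply (letr (meet (spec L O z w) (spec L O w x))); [|apply spec_trans].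
      apply meet_glb; [msolve|]. apply (letr (B x)); [|apply rep_le; auto].
      apply (letr (interior L O B x)); [msolve|apply int_le]. }
    apply (letr (meet (spec L O z x) (spec L O x y))); [|apply spec_trans].
    apply meet_glb; [apply (letr (Iw O x z)); [msolve|auto]|msolve].
  - apply spec_intro; intros U HU. apply (cover O x); auto. intros B w Hsc Hw.
    apply (letr (meet (spec L O w y) (U w))); [|apply spec_elim; auto].
    apply meet_glb; [|msolve].
    apply (letr (meet (subd L (Iw O x) (downset L (spec L O) y)) (Iw O x w))).
    + apply meet_glb; [msolve|]. apply (letr (interior L O B x)); [msolve|]. apply Iw_ge; auto.
    + apply (subd_elim (Iw O x) (downset L (spec L O) y) w).
Qed.

Lemma waybelow_eq {L : frame} {X} (O : (X -> L) -> Prop) x :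
  is_Ltopology L O -> locally_super_compact L O -> L_sober L O ->
  waybelow L (spec L O) x = Iw O x.
Proof.
  intros HT HL HS. apply functional_extensionality; intros z. apply leq.
  - unfold waybelow. eapply letr.
    + apply mt_lb with (i := exist _ (Iw O x, x) (conj (Iw_ideal O x HT HL HS) (Iw_lsup O x HT HL HS))).
    + simpl. rewrite spec_refl. apply (letr (meet (imp (top L) (Iw O x z)) (top L))).
      * apply meet_top_r.
      * apply mp.
  - unfold waybelow. apply mt_glb. intros [[J s] [HJ Hs]]. simpl in *. apply imp_adj.
    unfold Iw at 1. apply sup_elim_l. intros a [B [w [Hsc [Hw ->]]]].
    destruct HJ as [HJd HJl].
    apply (letr (meet (J w) (spec L O z w))); [|apply HJl].
    apply meet_glb; [|msolve].
    apply (letr (meet (interior L O B x) (spec L O x s))); [msolve|].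
    apply (letr (interior L O B s)).
    { apply (letr (meet (spec L O x s) (interior L O B x))); [msolve|].
      apply spec_elim. apply int_open; auto. }
    rewrite (lsup_open O J s HS HJd Hs (interior L O B) (int_open O B HT)).
    apply jn_least; intros y.
    apply (letr (meet (J y) (spec L O w y))); [|apply HJl].
    apply meet_mono; [apply le_refl|]. apply (letr (B y)); [apply int_le|apply rep_le; auto].
Qed.

Theorem proposition4p6 (L : frame) (X : Type) (O : (X -> L) -> Prop) :
  is_Ltopology L O ->
  locally_super_compact L O ->
  L_sober L O ->
  continuous_L_dcpo L (spec L O).
Proof.
  intros HT HL HS. split.
  - split; [apply spec_order; auto|].
    intros D HD. destruct (directed_lsup O D HS HD) as [x0 [H _]]. eauto.
  - intros x. rewrite (waybelow_eq O x HT HL HS). split.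
    + apply (Iw_ideal O x HT HL HS).
    + apply Iw_lsup; auto.
Qed.
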